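(* Let $m\ge3$, $n=2^m-1$, and let $\mathcal{C}$ be the $[2^m-1,2^m-1-m]$ binary Hamming code whose parity-check matrix has, as its $i$-th column, the binary representation of $i$ (as an $m$-bit vector), for $1\le i\le 2^m-1$. Then \[ N(\mathcal{C};S_2)=2^{\lfloor (2^m-1)/2\rfloor-1}. \]
   Context: $S_2\subseteq\{0,1\}^n$ (the 2-charge constraint) is the set of $\mathbf{x}\in\{0,1\}^n$ such that, with $y_i=(-1)^{x_i}$, $0\le\sum_{i=1}^r y_i\le 2$ for all $1\le r\le n$. $N(\mathcal{C};S_2)=|\mathcal{C}\cap S_2|$ is the number of codewords of $\mathcal{C}$ in $S_2$. *)

(* Defs.v *)
From mathcomp Require Import all_boot all_order all_algebra.
Set Implicit Arguments. Unset Strict Implicit. Unset Printing Implicit Defensive.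
Import Order.TTheory GRing.Theory Num.Theory.
Local Open Scope ring_scope.

(* Parity-check matrix of the binary Hamming code of length 2^m - 1:
   column i (0-indexed, i.e. the (i+1)-th column) is the m-bit binary
   representation of i+1; row j holds bit j (little-endian). *)
Definition hamming_H (m : nat) : 'M['F_2]_(m, 2 ^ m - 1) :=
  \matrix_(j < m, i < 2 ^ m - 1) ((((i.+1) %/ 2 ^ j) %% 2)%N%:R : 'F_2).

Definition hamming_code (m : nat) : {set 'rV['F_2]_(2 ^ m - 1)} :=
  [set c | hamming_H m *m c^T == 0].

Definition spin (b : 'F_2) : int := if b == 0 then 1 else -1.

Definition S2 (n : nat) : {set 'rV['F_2]_n} :=
  [set x : 'rV['F_2]_n | [forall r : 'I_n.+1,
     (0 <= \sum_(i < n | (i < r)%N) spin (x 0 i)) &&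
     (\sum_(i < n | (i < r)%N) spin (x 0 i) <= 2)]].

Definition Ncount (n : nat) (C S : {set 'rV['F_2]_n}) : nat := #|C :&: S|.

(* Main.v *)
Require Import Defs.
From mathcomp Require Import all_boot all_order all_algebra zify.
Set Implicit Arguments. Unset Strict Implicit. Unset Printing Implicit Defensive.
Import Order.TTheory GRing.Theory Num.Theory.
Local Open Scope ring_scope.
Lemma F2cases (b : 'F_2) : b = 0 \/ b = 1.
Proof. case: b => [[|[|k]] //= Hk]; [left|right]; exact/val_inj. Qed.
Lemma F2dbl (b : 'F_2) : b + b = 0.
Proof. by case: (F2cases b) => ->; [rewrite addr0|apply/val_inj]. Qed.

Definition sp (a : nat -> 'F_2) (r : nat) : int := \sum_(0 <= i < r) spin (a i).
Lemma spS a r : sp a r.+1 = sp a r + spin (a r).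
Proof. by rewrite /sp big_nat_recr. Qed.
Lemma sp0 a : sp a 0 = 0.
Proof. by rewrite /sp big_geq. Qed.

Lemma stepL (b c : 'F_2) : 0 <= 1 + spin b + spin c <= 2 ->
  c = 1 + b /\ 1 + spin b + spin c = 1.
Proof.
case: (F2cases b) => ->; case: (F2cases c) => -> //=; split => //; exact/val_inj.
Qed.
Lemma stepR (b : 'F_2) : 1 + spin b + spin (1 + b) = 1 /\ 0 <= 1 + spin b <= 2.
Proof.
by case: (F2cases b) => -> /=; rewrite ?addr0 //; have -> : (1 + 1 : 'F_2) = 0 by apply/val_inj.
Qed.

Lemma S2nat a K : (forall r, (r <= K.*2.+1)%N -> 0 <= sp a r <= 2) <->
  (a 0%N = 0 /\ forall k, (k < K)%N -> a k.*2.+2 = 1 + a k.*2.+1).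
Proof.
split.
- move=> H.
  have a0 : a 0%N = 0.
    have := H 1%N isT; rewrite spS sp0 add0r.
    by case: (F2cases (a 0%N)) => ->.
  have odd1 : forall k, (k <= K)%N -> sp a k.*2.+1 = 1.
    elim=> [|k IH] hk; first by rewrite spS sp0 a0.
    rewrite doubleS (spS a k.*2.+2) (spS a k.*2.+1) IH; last lia.
    have := H k.*2.+3 ltac:(lia).
    rewrite (spS a k.*2.+2) (spS a k.*2.+1) IH; last lia.
    by case/stepL.
  split => // k hk.
  have := H k.*2.+3 ltac:(lia).
  rewrite (spS a k.*2.+2) (spS a k.*2.+1) odd1; last lia.
  by case/stepL.
- case=> a0 Hp.
  have odd1 : forall k, (k <= K)%N -> sp a k.*2.+1 = 1.
    elim=> [|k IH] hk; first by rewrite spS sp0 a0.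
    rewrite doubleS (spS a k.*2.+2) (spS a k.*2.+1) IH; last lia.
    rewrite (Hp k); last lia.
    by case: (stepR (a k.*2.+1)).
  case=> [|r] hr; first by rewrite sp0.
  have := odd_double_half r.
  case: (odd r) => /= hrr.
  + have -> : r.+1 = (r./2).*2.+2 by lia.
    rewrite spS odd1; last lia.
    by case: (stepR (a (r./2).*2.+1)).
  + have -> : r.+1 = (r./2).*2.+1 by lia.
    by rewrite odd1; last lia.
Qed.

Section NatPart.
Local Open Scope nat_scope.
Definition bit (j k : nat) : nat := (k %/ 2 ^ j) %% 2.

Lemma bit_shift i q k : i < q -> bit i (k + 2 ^ q) = bit i k.
Proof.
move=> hiq. rewrite /bit.
have -> : 2 ^ q = (2 * 2 ^ (q - i).-1) * 2 ^ i.
  by rewrite -expnS -expnD; congr (2 ^ _); lia.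
by rewrite addnC divnMDl ?expn_gt0 // mulnC modnMDl.
Qed.

Lemma bit_small i k : k < 2 ^ i -> bit i k = 0.
Proof. by move=> h; rewrite /bit divn_small. Qed.

Lemma bit_top q k : k < 2 ^ q -> bit q (k + 2 ^ q) = 1.
Proof.
move=> h; rewrite /bit -{1}[2 ^ q]mul1n addnC divnMDl ?expn_gt0 // divn_small //.
Qed.

Lemma bit_even_sum q i : 0 < q -> i <= q ->
  2 %| \sum_(0 <= k < 2 ^ q.+1) bit i k.
Proof.
move=> hq hi.
rewrite expnS mul2n -addnn (big_cat_nat _ (n := 2 ^ q)) //=; last lia.
rewrite -{2}[2 ^ q]add0n big_addn addnK.
case: (ltngtP i q) => hiq; last 1 first.
- subst i.
  rewrite big_nat_cond big1; last by move=> k /andP [/andP [_ hk] _]; rewrite bit_small.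
  rewrite add0n big_nat_cond (eq_bigr (fun _ => 1)); last by move=> k /andP [/andP [_ hk] _]; rewrite bit_top.
  rewrite -big_nat_cond sum_nat_const_nat subn0 muln1.
  by rewrite -(prednK hq) expnS dvdn_mulr.
- rewrite [X in _ + X](eq_bigr (fun k => bit i k)); last by move=> k _; rewrite bit_shift.
  by rewrite addnn -mul2n dvdn_mulr.
- by lia.
Qed.

Lemma bit_odd j k : 0 < j -> bit j (k.*2.+1) = bit j.-1 k.
Proof.
move=> hj; rewrite /bit -(prednK hj) expnS divnMA /=.
congr (_ %/ _ %% 2); lia.
Qed.

Lemma bit_even j k : 0 < j -> bit j (k.*2.+2) = bit j (k.*2.+3).
Proof.
move=> hj; rewrite /bit -(prednK hj) expnS !divnMA.
congr (_ %/ _ %% 2). lia.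
Qed.

End NatPart.

Definition xa n (x : 'rV['F_2]_n) (k : nat) : 'F_2 :=
  if insub k is Some i then x 0 i else 0.

Lemma xaE n (x : 'rV['F_2]_n) (i : 'I_n) : xa x i = x 0 i.
Proof. by rewrite /xa valK. Qed.

Lemma xaE' n (x : 'rV['F_2]_n) k (hk : (k < n)%N) : xa x k = x 0 (Ordinal hk).
Proof. by rewrite -xaE. Qed.

Lemma sumS2 n (x : 'rV['F_2]_n) (r : nat) : (r <= n)%N ->
  \sum_(i < n | (i < r)%N) spin (x 0 i) = sp (xa x) r.
Proof.
move=> hr; rewrite /sp big_mkord (@big_ord_widen_cond _ 0 +%R r n predT (fun i => spin (xa x i)) hr).
by apply: eq_big => // i; rewrite xaE.
Qed.

Lemma S2E n (x : 'rV['F_2]_n) :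
  x \in S2 n <-> (forall r, (r <= n)%N -> 0 <= sp (xa x) r <= 2).
Proof.
rewrite inE; split.
- move/forallP => H r hr. have := H (Ordinal (hr : (r < n.+1)%N)).
  by rewrite sumS2.
- move=> H; apply/forallP => r. rewrite sumS2; last by rewrite -ltnS.
  by apply: H; rewrite -ltnS.
Qed.

Lemma hamE m (x : 'rV['F_2]_(2 ^ m - 1)) : x \in hamming_code m <->
  (forall j, (j < m)%N -> \sum_(0 <= i < 2 ^ m - 1) (bit j i.+1)%:R * xa x i = 0).
Proof.
rewrite inE; split.
- move/eqP/matrixP => H j hj; have := H (Ordinal hj) 0; rewrite !mxE => h; rewrite -[RHS]h.
  by rewrite big_mkord; apply: eq_bigr => i _; rewrite !mxE xaE.
- move=> H; apply/eqP/matrixP => j k; rewrite ord1 !mxE -[RHS](H j (ltn_ord j)).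
  by rewrite big_mkord; apply: eq_bigr => i _; rewrite !mxE xaE.
Qed.

Lemma pairsum (F : nat -> 'F_2) K :
  \sum_(0 <= i < K.*2.+1) F i = F 0%N + \sum_(0 <= k < K) (F k.*2.+1 + F k.*2.+2).
Proof.
elim: K => [|K IH]; first by rewrite big_nat_recr //= !big_geq // add0r addr0.
by rewrite doubleS big_nat_recr // big_nat_recr // [in RHS]big_nat_recr //= IH !addrA.
Qed.

Lemma rowsum (a : nat -> 'F_2) K j : a 0%N = 0 ->
  (forall k, (k < K)%N -> a k.*2.+2 = 1 + a k.*2.+1) ->
  \sum_(0 <= i < K.*2.+1) (bit j i.+1)%:R * a i =
  if j == 0%N then K%:R + \sum_(0 <= k < K) a k.*2.+1
  else (\sum_(0 <= k < K) bit j k.*2.+3)%:R.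
Proof.
move=> a0 hp; rewrite pairsum a0 mulr0 add0r.
rewrite (eq_big_nat _ _ (F2 := fun k => if j == 0%N then 1 + a k.*2.+1
                         else (bit j k.*2.+3)%:R)); last first.
  move=> k /andP [_ hk]; rewrite hp //.
  case: eqP => [->|/eqP hj].
  + have -> : bit 0 k.*2.+2 = 0%N by rewrite /bit expn0 divn1; apply/eqP; rewrite modn2 /= odd_double.
    have -> : bit 0 k.*2.+3 = 1%N by rewrite /bit expn0 divn1 modn2 /= odd_double.
    by rewrite mul0r add0r mul1r.
  + rewrite bit_even ?lt0n // mulrDr mulr1 addrCA F2dbl addr0 //.
case: eqP => _.
- by rewrite big_split /= sumr_const_nat subn0.
- by rewrite natr_sum.
Qed.

Lemma F2even t : (2 %| t)%N -> (t%:R : 'F_2) = 0.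
Proof. by move=> h; rewrite -(Fp_nat_mod (p := 2)) // (eqP h). Qed.

Lemma F2odd t : odd t -> (t%:R : 'F_2) = 1.
Proof. by move=> h; rewrite -(Fp_nat_mod (p := 2)) // modn2 h. Qed.

Lemma rowsum' (a : nat -> 'F_2) n K j : n = K.*2.+1 -> a 0%N = 0 ->
  (forall k, (k < K)%N -> a k.*2.+2 = 1 + a k.*2.+1) ->
  \sum_(0 <= i < n) (bit j i.+1)%:R * a i =
  if j == 0%N then K%:R + \sum_(0 <= k < K) a k.*2.+1
  else (\sum_(0 <= k < K) bit j k.*2.+3)%:R.
Proof. by move=> ->; exact: rowsum. Qed.

Lemma evensum m j : (3 <= m)%N -> (0 < j)%N -> (j < m)%N ->
  (2 %| \sum_(0 <= k < (2 ^ (m - 1) - 1)) bit j k.*2.+3)%N.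
Proof.
move=> hm hj hjm.
rewrite (eq_big_nat _ _ (F2 := fun k => bit j.-1 k.+1)); last first.
  by move=> k _; rewrite -bit_odd.
have -> : \sum_(0 <= k < (2 ^ (m - 1) - 1)) bit j.-1 k.+1 =
          \sum_(0 <= k < (2 ^ (m - 1) - 1).+1) bit j.-1 k.
  by rewrite big_nat_recl // /bit div0n mod0n.
have -> : ((2 ^ (m - 1) - 1).+1 = 2 ^ (m - 2).+1)%N.
  have -> : (m - 2).+1 = (m - 1)%N by lia.
  have := expn_gt0 2 (m - 1); lia.
apply: bit_even_sum; lia.
Qed.

Definition good (x : nat -> 'F_2) K :=
  x 0%N = 0 /\ forall k, (k < K)%N -> x k.*2.+2 = 1 + x k.*2.+1.

Lemma hamGood m K (x : 'rV['F_2]_(2 ^ m - 1)) : (3 <= m)%N ->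
  K = (2 ^ (m - 1) - 1)%N -> (2 ^ m - 1 = K.*2.+1)%N -> good (xa x) K ->
  x \in hamming_code m <-> \sum_(0 <= k < K) xa x k.*2.+1 = 1.
Proof.
move=> hm hK hn [a0 hp].
have oK : odd K.
  have := expn_gt0 2 (m - 2); have : (2 ^ (m - 1) = (2 ^ (m - 2)).*2)%N.
    by rewrite -mul2n -expnS; congr (expn 2 _); lia.
  lia.
rewrite hamE; split.
- move=> H; have := H 0%N ltac:(lia).
  rewrite (rowsum' _ hn a0 hp) eqxx F2odd //.
  by case: (F2cases (\sum_(0 <= k < K) xa x k.*2.+1)) => -> // /eqP.
- move=> hs j hj; rewrite (rowsum' _ hn a0 hp).
  case: eqP => [_|/eqP hj0].
  + by rewrite hs F2odd //; apply/val_inj.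
  + by apply: F2even; rewrite hK; apply: evensum; rewrite // lt0n.
Qed.

Lemma S2good n K (x : 'rV['F_2]_n) : n = K.*2.+1 -> x \in S2 n <-> good (xa x) K.
Proof.
move=> hn; rewrite S2E /good -S2nat; split => H r hr; apply: H; by rewrite ?hn // -hn.
Qed.

Definition vn K (v : {ffun 'I_K -> 'F_2}) (k : nat) : 'F_2 :=
  if insub k is Some o then v o else 0.

Lemma vnE K (v : {ffun 'I_K -> 'F_2}) (k : 'I_K) : vn v k = v k.
Proof. by rewrite /vn valK. Qed.

Definition fmap n K (v : {ffun 'I_K -> 'F_2}) : 'rV['F_2]_n :=
  \row_(i < n) (if i == 0%N :> nat then 0
                else if odd i then vn v i./2 else 1 + vn v (i./2).-1).

Lemma half_odd k : (k.*2.+1)./2 = k.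
Proof. by rewrite /= uphalf_double. Qed.

Lemma fmap_xa n K (v : {ffun 'I_K -> 'F_2}) : n = K.*2.+1 ->
  [/\ xa (fmap n v) 0%N = 0,
      forall k, (k < K)%N -> xa (fmap n v) k.*2.+1 = vn v k &
      forall k, (k < K)%N -> xa (fmap n v) k.*2.+2 = 1 + vn v k].
Proof.
move=> hn; split.
- have h0 : (0 < n)%N by rewrite hn.
  by rewrite (xaE' _ h0) mxE.
- move=> k hk; have h1 : (k.*2.+1 < n)%N by rewrite hn; lia.
  by rewrite (xaE' _ h1) mxE /= odd_double ?half_odd ?uphalf_double.
- move=> k hk; have h1 : (k.*2.+2 < n)%N by rewrite hn; lia.
  rewrite (xaE' _ h1) mxE /= odd_double /=.
  by rewrite doubleK.
Qed.

Lemma fmap_inj n K : n = K.*2.+1 -> injective (@fmap n K).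
Proof.
move=> hn v w e; apply/ffunP => k.
case: (fmap_xa v hn) => _ hv _; case: (fmap_xa w hn) => _ hw _.
by rewrite -!vnE -hv // -hw // e.
Qed.

Lemma oddcount K : (0 < K)%N ->
  #|[set v : {ffun 'I_K -> 'F_2} | \sum_k v k == 1]| = (2 ^ K.-1)%N.
Proof.
move=> hK; set A := [set v : {ffun 'I_K -> 'F_2} | \sum_k v k == 1].
pose k0 : 'I_K := Ordinal hK.
pose t (v : {ffun 'I_K -> 'F_2}) : {ffun 'I_K -> 'F_2} :=
  [ffun k => (if k == k0 then 1 else 0) + v k].
have tK : involutive t.
  by move=> v; apply/ffunP => k; rewrite !ffunE addrA F2dbl add0r.
have ts : forall v, \sum_k t v k = 1 + \sum_k v k.
  move=> v; rewrite (eq_bigr (fun k => (if k == k0 then 1 else 0) + v k)); last first.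
    by move=> k _; rewrite ffunE.
  rewrite big_split /= (bigD1 k0) //= big1 ?addr0 //.
  by move=> k /negbTE ->.
have tA : t @: A = ~: A.
  apply/setP => v; rewrite inE; apply/imsetP/idP.
  - case=> w; rewrite !inE => /eqP hw ->; rewrite ts hw.
    by apply/eqP => /(congr1 val).
  - rewrite inE => hv; exists (t v); last by rewrite tK.
    rewrite inE ts; case: (F2cases (\sum_k v k)) hv => -> //.
have := cardsC A; rewrite -tA card_imset; last exact: inv_inj.
rewrite card_ffun card_Fp // card_ord addnn => h.
have e : (2 ^ K = 2 * 2 ^ K.-1)%N by rewrite -expnS prednK.
lia.
Qed.

Theorem mainTheorem12 (m : nat) (hm : (3 <= m)%N) :
  Ncount (hamming_code m) (S2 (2 ^ m - 1)) = (2 ^ ((2 ^ m - 1) %/ 2 - 1))%N.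
Proof.
set K := (2 ^ (m - 1) - 1)%N.
have ht : (2 ^ (m - 1) = (2 ^ (m - 2)).*2)%N.
  by rewrite -mul2n -expnS; congr (expn 2 _); lia.
have tpos := expn_gt0 2 (m - 2).
have hm2 : (2 ^ m = (2 ^ (m - 1)).*2)%N.
  by rewrite -mul2n -expnS; congr (expn 2 _); lia.
have hn : (2 ^ m - 1 = K.*2.+1)%N by rewrite /K; lia.
have hK : (0 < K)%N by rewrite /K; lia.
have -> : ((2 ^ m - 1) %/ 2 - 1 = K.-1)%N by rewrite hn; lia.
rewrite -(oddcount hK) /Ncount.
have -> : hamming_code m :&: S2 (2 ^ m - 1) =
    [set fmap (2 ^ m - 1) v | v in [set v : {ffun 'I_K -> 'F_2} | \sum_k v k == 1]].
  apply/setP => x; rewrite inE; apply/andP/imsetP.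
  - case=> hC hS.
    have g := (S2good x hn).1 hS.
    have P := (hamGood hm erefl hn g).1 hC.
    exists [ffun k : 'I_K => xa x k.*2.+1].
    + rewrite inE; apply/eqP; rewrite -[RHS]P big_mkord.
      by apply: eq_bigr => k _; rewrite ffunE.
    + apply/rowP => i; rewrite mxE -xaE; case: g => g0 gp.
      have hi0 : (i < K.*2.+1)%N by rewrite -hn.
      case: eqP => [->|/eqP i0] //.
      have := odd_double_half i; case ho: (odd i) => /= hi.
      * have hk : ((nat_of_ord i)./2 < K)%N by lia.
        rewrite (_ : (nat_of_ord i)./2 = Ordinal hk) // vnE ffunE /=.
        by rewrite -{1}hi add1n.
      * have hk : (((nat_of_ord i)./2).-1 < K)%N by lia.
        rewrite (_ : ((nat_of_ord i)./2).-1 = Ordinal hk) // vnE ffunE /=.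
        rewrite -gp //.
        congr (xa x _). lia.
  - case=> v; rewrite inE => /eqP hv ->.
    case: (fmap_xa v hn) => f0 f1 f2.
    have g : good (xa (fmap (2 ^ m - 1) v)) K.
      by split => // k hk; rewrite f1 // f2.
    split; [apply/(hamGood hm erefl hn g) | apply/(S2good _ hn)] => //.
    rewrite -[RHS]hv big_mkord.
    by apply: eq_bigr => k _; rewrite f1 // vnE.
by rewrite card_imset //; exact: fmap_inj hn.
Qed.
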